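(* Let $j \in [d]$ and let $\mathcal{Y} = \sum_{k=1}^r \alpha_k \bigcirc_{\ell=1}^d \mathbf{y}^{(\ell)}_k \in \mathbb{C}^{n_1\times\cdots\times n_d}$ be a rank-$r$ tensor in standard form. Let $\epsilon \in (0,1)$ and suppose $\mathbf{A} \in \mathbb{C}^{m\times n_j}$ is an $(\epsilon/4)$-JL embedding into $\mathbb{C}^m$ of the $2r^2 - r$ vectors $$\Big(\bigcup_{1\le h<k\le r}\{\mathbf{y}^{(j)}_k - \mathbf{y}^{(j)}_h,\ \mathbf{y}^{(j)}_k + \mathbf{y}^{(j)}_h,\ \mathbf{y}^{(j)}_k - \mathrm{i}\,\mathbf{y}^{(j)}_h,\ \mathbf{y}^{(j)}_k + \mathrm{i}\,\mathbf{y}^{(j)}_h\}\Big)\cup\{\mathbf{y}^{(j)}_k\}_{k\in[r]} \subset \mathbb{C}^{n_j}.$$ Let $\mathcal{Y}' := \mathcal{Y}\times_j \mathbf{A}$, written in standard form as $$\mathcal{Y}' = \sum_{k=1}^r \alpha'_k \Big( \big(\bigcirc_{\ell<j}\mathbf{y}^{(\ell)}_k\big)\bigcirc \frac{\mathbf{A}\mathbf{y}^{(j)}_k}{\|\mathbf{A}\mathbf{y}^{(j)}_k\|_2}\bigcirc\big(\bigcirc_{\ell>j}\mathbf{y}^{(\ell)}_k\big)\Big),\qquad \alpha'_k = \alpha_k\|\mathbf{A}\mathbf{y}^{(j)}_k\|_2 .$$ Then: (1) $|\alpha'_k - \alpha_k| \leq \epsilon|\alpha_k|/4$ for all $k\in[r]$,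 so that $\|\boldsymbol\alpha'\|_\infty \leq (1+\epsilon/4)\|\boldsymbol\alpha\|_\infty$; (2) $\mu_{\mathcal{Y}',j} \leq \frac{\mu_{\mathcal{Y},j}+\epsilon}{1-\epsilon/4}$, and $\mu_{\mathcal{Y}',\ell} = \mu_{\mathcal{Y},\ell}$ for all $\ell\in[d]\setminus\{j\}$; (3) $\displaystyle \big|\|\mathcal{Y}'\|^2 - \|\mathcal{Y}\|^2\big| \leq \epsilon\Big(1+\sqrt{r(r-1)}\prod_{\ell\neq j}\mu_{\mathcal{Y},\ell}\Big)\|\boldsymbol\alpha\|_2^2 \leq \epsilon\big(1+r\mu_{\mathcal{Y}}^{d-1}\big)\|\boldsymbol\alpha\|_2^2 \leq \epsilon(r+1)\|\boldsymbol\alpha\|_2^2.$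
   Context: Tensors in $\mathbb{C}^{n_1\times\cdots\times n_d}$ have inner product $\langle\mathcal{X},\mathcal{Y}\rangle=\sum\mathcal{X}_{i_1\dots i_d}\overline{\mathcal{Y}_{i_1\dots i_d}}$ and norm $\|\cdot\|$; $\bigcirc$ is the outer product; the $j$-mode product is $(\mathcal{X}\times_j\mathbf{U})_{i_1,\dots,\ell,\dots,i_d}=\sum_{i_j}\mathcal{X}_{i_1,\dots,i_j,\dots,i_d}\mathbf{U}_{\ell,i_j}$; $\mathrm{i}$ is the imaginary unit. A linear map $L$ is an $\epsilon$-JL embedding of a set $S$ if for each $x\in S$, $\|L(x)\|^2=(1+\epsilon_x)\|x\|^2$ for some $\epsilon_x\in(-\epsilon,\epsilon)$. A rank-$r$ tensor in standard form is $\mathcal{Y}=\sum_{k=1}^r\alpha_k\bigcirc_{\ell=1}^d\mathbf{y}^{(\ell)}_k$ with $\|\mathbf{y}^{(\ell)}_k\|_2=1$ for all $\ell,k$; $\boldsymbol\alpha=(\alpha_1,\dots,\alpha_r)$. Relative to this representation, the modewise coherences are $\mu_{\mathcal{Y},\ell}=\max_{k\ne h}|\langle\mathbf{y}^{(\ell)}_k,\mathbf{y}^{(\ell)}_h\rangle|$ and the maximum modewise coherence is $\mu_{\mathcal{Y}}=\max_{\ell\in[d]}\mu_{\mathcal{Y},\ell}$ (for $\mathcal{Y}'$, these are computed from the displayed standard form of $\mathcal{Y}'$). *)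

(* Defs.v *)
From HB Require Import structures.
From mathcomp Require Import all_boot all_order all_algebra.
From mathcomp Require Import complex.
From mathcomp Require Import reals.
Set Implicit Arguments. Unset Strict Implicit. Unset Printing Implicit Defensive.
Import Order.TTheory GRing.Theory Num.Theory.
Local Open Scope ring_scope.

Section Defs.
Variable R : realType.
Local Notation C := R[i].

Definition vdot (p : nat) (x y : 'cV[C]_p) : C := \sum_(i < p) x i 0 * (y i 0)^*.
Definition vnorm (p : nat) (x : 'cV[C]_p) : C := sqrtC (\sum_(i < p) `|x i 0| ^+ 2).

(* entry x of v, or 0 if out of range (used only to avoid dependent casts) *)
Definition vget (p : nat) (v : 'cV[C]_p) (x : nat) : C :=
  if insub x is Some i then v i 0 else 0.

Definition JL_embedding (m p : nat) (eps : C) (A : 'M[C]_(m, p)) (S : 'cV[C]_p -> Prop) :=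
  forall x, S x -> exists ex : C, - eps < ex < eps /\
     vnorm (A *m x) ^+ 2 = (1 + ex) * vnorm x ^+ 2.

Definition tidx (d : nat) (n : 'I_d -> nat) := {dffun forall l : 'I_d, 'I_(n l)}.
Definition tensor (d : nat) (n : 'I_d -> nat) := tidx n -> C.

Definition tdot d (n : 'I_d -> nat) (X Y : tensor n) : C :=
  \sum_(i : tidx n) X i * (Y i)^*.
Definition tnorm d (n : 'I_d -> nat) (X : tensor n) : C :=
  sqrtC (\sum_(i : tidx n) `|X i| ^+ 2).

Definition outer d (n : 'I_d -> nat) (v : forall l : 'I_d, 'cV[C]_(n l)) : tensor n :=
  fun i => \prod_(l < d) v l (i l) 0.

Definition rank_tensor d (n : 'I_d -> nat) (r : nat) (alpha : 'I_r -> C)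
  (y : forall l : 'I_d, 'I_r -> 'cV[C]_(n l)) : tensor n :=
  fun i => \sum_(k < r) alpha k * outer (fun l => y l k) i.

Definition standard_form d (n : 'I_d -> nat) (r : nat)
  (y : forall l : 'I_d, 'I_r -> 'cV[C]_(n l)) :=
  forall l k, vnorm (y l k) = 1.

Definition upd d (n : 'I_d -> nat) (j : 'I_d) (m : nat) : 'I_d -> nat :=
  fun l => if l == j then m else n l.

Lemma sub_idx_proof d (n : 'I_d -> nat) (j : 'I_d) (m : nat)
  (i' : tidx (upd n j m)) (t : 'I_(n j)) (l : 'I_d) :
  ((if l == j then val t else val (i' l)) < n l)%N.
Proof.
case: (eqVneq l j) => [->|nlj]; first exact: ltn_ord.
move: (i' l); rewrite /upd (negbTE nlj) => x.
exact: ltn_ord.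
Qed.

Lemma j_idx_proof d (n : 'I_d -> nat) (j : 'I_d) (m : nat) (i' : tidx (upd n j m)) :
  (val (i' j) < m)%N.
Proof. by move: (i' j); rewrite /upd eqxx => x; exact: ltn_ord. Qed.

Definition sub_idx d (n : 'I_d -> nat) (j : 'I_d) (m : nat)
  (i' : tidx (upd n j m)) (t : 'I_(n j)) : tidx n :=
  [ffun l => Ordinal (sub_idx_proof i' t l)].

(* j-mode product:  (X x_j U)_{i_1..l..i_d} = sum_{i_j} X_{i_1..i_j..i_d} U_{l,i_j} *)
Definition mode_prod d (n : 'I_d -> nat) (X : tensor n) (j : 'I_d) (m : nat)
  (U : 'M[C]_(m, n j)) : tensor (upd n j m) :=
  fun i' => \sum_(t < n j) X (sub_idx i' t) * U (Ordinal (j_idx_proof i')) t.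

(* modewise coherence of a family of r vectors: max_{k<>h} |<v_k, v_h>|
   (0 when r <= 1) *)
Definition coherence (p r : nat) (v : 'I_r -> 'cV[C]_p) : C :=
  \big[Num.max/0]_(k < r) \big[Num.max/0]_(h < r | h != k) `|vdot (v k) (v h)|.

Definition inf_norm (r : nat) (a : 'I_r -> C) : C := \big[Num.max/0]_(k < r) `|a k|.
Definition l2_norm (r : nat) (a : 'I_r -> C) : C := sqrtC (\sum_(k < r) `|a k| ^+ 2).

End Defs.

(* Main.v *)
Require Import Defs.
From HB Require Import structures.
From mathcomp Require Import all_boot all_order all_algebra.
From mathcomp Require Import complex.
From mathcomp Require Import reals.
From mathcomp Require Import ring.
Import Order.TTheory GRing.Theory Num.Theory.
Set Implicit Arguments. Unset Strict Implicit. Unset Printing Implicit Defensive.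
Local Open Scope ring_scope.

Lemma maxr_le (K : numDomainType) (x y b : K) : x <= b -> y <= b -> Num.max x y <= b.
Proof. by move=> hx hy; rewrite /Num.max /Order.max; case: ifP. Qed.

Lemma maxr_ge0 (K : numDomainType) (x y : K) : 0 <= x -> 0 <= y -> 0 <= Num.max x y.
Proof. by move=> hx hy; rewrite /Num.max /Order.max; case: ifP. Qed.

Lemma maxr_gel (K : numDomainType) (x y : K) : x <= Num.max x y.
Proof. by rewrite /Num.max /Order.max; case: ifP => // /ltW. Qed.

Lemma maxr_ger (K : numDomainType) (x y : K) : 0 <= x -> 0 <= y -> y <= Num.max x y.
Proof.
move=> hx hy; rewrite /Num.max /Order.max; case: ifP => // h.
by rewrite real_leNgt ?h // ger0_real.
Qed.

Lemma bigmax_le (K : numDomainType) (I : finType) (P : pred I) (F : I -> K) (b : K) :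
  0 <= b -> (forall i, P i -> F i <= b) -> \big[Num.max/0]_(i | P i) F i <= b.
Proof. move=> hb hF; elim/big_ind: _ => // x y; exact: maxr_le. Qed.

Lemma bigmax_ge0 (K : numDomainType) (I : finType) (P : pred I) (F : I -> K) :
  (forall i, P i -> 0 <= F i) -> 0 <= \big[Num.max/0]_(i | P i) F i.
Proof. by move=> hF; elim/big_ind: _ => // x y; exact: maxr_ge0. Qed.

Lemma le_bigmax (K : numDomainType) (I : finType) (P : pred I) (F : I -> K) (i0 : I) :
  (forall i, P i -> 0 <= F i) -> P i0 -> F i0 <= \big[Num.max/0]_(i | P i) F i.
Proof.
move=> hF Pi0; have : i0 \in index_enum I by rewrite mem_index_enum.
elim: (index_enum I) => [//|x s IH]; rewrite inE big_cons => /orP [/eqP <-|xs].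
  by rewrite Pi0; exact: maxr_gel.
have hs : 0 <= \big[Num.max/0]_(i <- s | P i) F i.
  by elim/big_ind: _ => // a b; exact: maxr_ge0.
case: ifP => Px; last exact: IH.
apply: (le_trans (IH xs)); exact: maxr_ger (hF _ Px) hs.
Qed.

Lemma vdotDl (R : realType) p (x y z : 'cV[R[i]]_p) : vdot (x + y) z = vdot x z + vdot y z.
Proof. by rewrite /vdot -big_split; apply: eq_bigr => k _; rewrite mxE mulrDl. Qed.

Lemma vdotDr (R : realType) p (x y z : 'cV[R[i]]_p) : vdot x (y + z) = vdot x y + vdot x z.
Proof. by rewrite /vdot -big_split; apply: eq_bigr => k _; rewrite mxE rmorphD mulrDr. Qed.

Lemma vdotZl (R : realType) p (c : R[i]) (x y : 'cV[R[i]]_p) : vdot (c *: x) y = c * vdot x y.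
Proof. by rewrite /vdot mulr_sumr; apply: eq_bigr => k _; rewrite mxE mulrA. Qed.

Lemma vdotZr (R : realType) p (c : R[i]) (x y : 'cV[R[i]]_p) : vdot x (c *: y) = c^* * vdot x y.
Proof. by rewrite /vdot mulr_sumr; apply: eq_bigr => k _; rewrite mxE rmorphM mulrCA. Qed.

Lemma vdotC (R : realType) p (x y : 'cV[R[i]]_p) : vdot y x = (vdot x y)^*.
Proof. by rewrite /vdot rmorph_sum; apply: eq_bigr => k _; rewrite rmorphM /= conjCK mulrC. Qed.

Lemma vdot_self (R : realType) p (x : 'cV[R[i]]_p) : vdot x x = \sum_(k < p) `|x k 0| ^+ 2.
Proof. by apply: eq_bigr => k _; rewrite normCK. Qed.

Lemma vdot_self_ge0 (R : realType) p (x : 'cV[R[i]]_p) : 0 <= vdot x x.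
Proof. by rewrite vdot_self; apply: sumr_ge0 => k _; rewrite exprn_ge0. Qed.

Lemma vnorm_sq (R : realType) p (x : 'cV[R[i]]_p) : vnorm x ^+ 2 = vdot x x.
Proof. by rewrite /vnorm sqrtCK vdot_self. Qed.

Lemma vnorm_ge0 (R : realType) p (x : 'cV[R[i]]_p) : 0 <= vnorm x.
Proof. by rewrite /vnorm sqrtC_ge0 -vdot_self vdot_self_ge0. Qed.

Lemma vdot_expand (R : realType) p (c : R[i]) (x y : 'cV[R[i]]_p) :
  vdot (x + c *: y) (x + c *: y) =
  vdot x x + c^* * vdot x y + c * vdot y x + c * c^* * vdot y y.
Proof.
rewrite !vdotDl !vdotDr !vdotZl !vdotZr; ring.
Qed.

Definition Qf (R : realType) p (x : 'cV[R[i]]_p) := vdot x x.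

Lemma vdot_expand' (R : realType) p (c c' : R[i]) (x y : 'cV[R[i]]_p) : c^* = c' ->
  Qf (x + c *: y) = vdot x x + c' * vdot x y + c * vdot y x + c * c' * vdot y y.
Proof. by move=> <-; rewrite /Qf vdot_expand. Qed.

Lemma conj1' (R : realType) : (1 : R[i])^* = 1.
Proof. exact: rmorph1. Qed.
Lemma conjN1' (R : realType) : (-1 : R[i])^* = -1.
Proof. by rewrite rmorphN rmorph1. Qed.
Lemma conjNi' (R : realType) : (- 'i : R[i])^* = 'i.
Proof. by rewrite rmorphN /= conjCi opprK. Qed.
Lemma conji' (R : realType) : ('i : R[i])^* = - 'i.
Proof. exact: conjCi. Qed.

Lemma polar_alg (K : numClosedFieldType) (s t pq qp q1 q2 q3 q4 : K) :
  q1 = s + 1 * pq + 1 * qp + 1 * 1 * t ->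
  q2 = s + (-1) * pq + (-1) * qp + (-1) * (-1) * t ->
  q3 = s + 'i * pq + (- 'i) * qp + (- 'i) * 'i * t ->
  q4 = s + (- 'i) * pq + 'i * qp + 'i * (- 'i) * t ->
  4 * pq = q1 - q2 - 'i * (q3 - q4) /\ q1 + q2 + q3 + q4 = 4 * (s + t).
Proof.
move=> -> -> -> ->.
have h : ('i : K) * 'i = -1 by rewrite -expr2 sqrCi.
by split; ring: h.
Qed.

Lemma polar_both (R : realType) p (x y : 'cV[R[i]]_p) :
  4 * vdot x y = Qf (x + 1 *: y) - Qf (x + (-1) *: y)
                 - 'i * (Qf (x + (- 'i) *: y) - Qf (x + 'i *: y)) /\
  Qf (x + 1 *: y) + Qf (x + (-1) *: y) + Qf (x + (- 'i) *: y) + Qf (x + 'i *: y)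
  = 4 * (vdot x x + vdot y y).
Proof.
have E1 := @vdot_expand' R p 1 1 x y (conj1' R).
have E2 := @vdot_expand' R p (-1) (-1) x y (conjN1' R).
have E3 := @vdot_expand' R p (- 'i) 'i x y (conjNi' R).
have E4 := @vdot_expand' R p 'i (- 'i) x y (conji' R).
exact: (polar_alg E1 E2 E3 E4).
Qed.

Lemma polar (R : realType) p (x y : 'cV[R[i]]_p) :
  4 * vdot x y = Qf (x + 1 *: y) - Qf (x + (-1) *: y)
                 - 'i * (Qf (x + (- 'i) *: y) - Qf (x + 'i *: y)).
Proof. exact: (proj1 (polar_both x y)). Qed.

Lemma polar_sum (R : realType) p (x y : 'cV[R[i]]_p) :
  Qf (x + 1 *: y) + Qf (x + (-1) *: y) + Qf (x + (- 'i) *: y) + Qf (x + 'i *: y)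
  = 4 * (vdot x x + vdot y y).
Proof. exact: (proj2 (polar_both x y)). Qed.

Lemma mulmx_lin (R : realType) m p (A : 'M[R[i]]_(m, p)) (c : R[i]) (x y : 'cV[R[i]]_p) :
  A *m (x + c *: y) = A *m x + c *: (A *m y).
Proof. by rewrite mulmxDr scalemxAr. Qed.

Lemma cs_unit (R : realType) p (u v : 'cV[R[i]]_p) :
  vdot u u = 1 -> vdot v v = 1 -> `|vdot u v| <= 1.
Proof.
move=> hu hv; have := vdot_self_ge0 (u + (- vdot u v) *: v).
rewrite -/(Qf _) (vdot_expand' _ _ (rmorphN _ _)) /Qf hu hv (vdotC u v).
have -> : 1 + - (vdot u v)^* * vdot u v + - vdot u v * (vdot u v)^* +
   - vdot u v * - (vdot u v)^* * 1 = 1 - vdot u v * (vdot u v)^* by ring.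
rewrite -normCK subr_ge0 => h.
by rewrite -(expr_le1 (n := 2)) // normr_ge0.
Qed.

Lemma jl_abs (R : realType) (E ex : R[i]) : 0 < E -> - E < ex < E -> `|ex| <= E.
Proof.
move=> E0 /andP [h1 h2].
have rE : E \is Num.real by exact: gtr0_real.
have r1 : ex + E \is Num.real by apply: gtr0_real; rewrite -(opprK E) subr_gt0.
have rex : ex \is Num.real by rewrite -(addrK E ex) rpredB.
by rewrite real_ler_norml // !ltW.
Qed.

Lemma Qf_ge0 (R : realType) p (x : 'cV[R[i]]_p) : 0 <= Qf x.
Proof. exact: vdot_self_ge0. Qed.

Lemma pair_core (K : numClosedFieldType) (vA v QA1 QA2 QA3 QA4 Q1 Q2 Q3 Q4 e1 e2 e3 e4 E : K) :
  0 <= Q1 -> 0 <= Q2 -> 0 <= Q3 -> 0 <= Q4 ->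
  `|e1| <= E -> `|e2| <= E -> `|e3| <= E -> `|e4| <= E ->
  QA1 = (1 + e1) * Q1 -> QA2 = (1 + e2) * Q2 -> QA3 = (1 + e3) * Q3 -> QA4 = (1 + e4) * Q4 ->
  4 * vA = QA1 - QA2 - 'i * (QA3 - QA4) ->
  4 * v = Q1 - Q2 - 'i * (Q3 - Q4) ->
  4 * `|vA - v| <= E * (Q1 + Q2 + Q3 + Q4).
Proof.
move=> h1 h2 h3 h4 b1 b2 b3 b4 -> -> -> -> eA eX.
have key : 4 * (vA - v) = e1 * Q1 - e2 * Q2 - 'i * (e3 * Q3 - e4 * Q4).
  by rewrite mulrBr eA eX; ring.
have -> : 4 * `|vA - v| = `|4 * (vA - v)|.
  by rewrite normrM (ger0_norm (_ : 0 <= 4)) // ler0n.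
rewrite key.
have hb : forall e Q, 0 <= Q -> `|e| <= E -> `|e * Q| <= E * Q.
  by move=> e Q hQ he; rewrite normrM (ger0_norm hQ) ler_wpM2r.
apply: (le_trans (ler_normB _ _)).
rewrite normrM normCi mul1r.
apply: (le_trans (lerD (ler_normB _ _) (ler_normB _ _))).
have -> : E * (Q1 + Q2 + Q3 + Q4) = E * Q1 + E * Q2 + (E * Q3 + E * Q4) by ring.
by rewrite !lerD // hb.
Qed.

Lemma pair_bound (R : realType) m p (A : 'M[R[i]]_(m, p)) (x y : 'cV[R[i]]_p) (E : R[i]) :
  (exists e, `|e| <= E /\ Qf (A *m (x + 1 *: y)) = (1 + e) * Qf (x + 1 *: y)) ->
  (exists e, `|e| <= E /\ Qf (A *m (x + (-1) *: y)) = (1 + e) * Qf (x + (-1) *: y)) ->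
  (exists e, `|e| <= E /\ Qf (A *m (x + (- 'i) *: y)) = (1 + e) * Qf (x + (- 'i) *: y)) ->
  (exists e, `|e| <= E /\ Qf (A *m (x + 'i *: y)) = (1 + e) * Qf (x + 'i *: y)) ->
  4 * `|vdot (A *m x) (A *m y) - vdot x y| <= E * (4 * (vdot x x + vdot y y)).
Proof.
move=> [e1 [b1 q1]] [e2 [b2 q2]] [e3 [b3 q3]] [e4 [b4 q4]].
have eA := polar (A *m x) (A *m y).
rewrite -(mulmx_lin A 1 x y) -(mulmx_lin A (-1) x y) in eA.
rewrite -(mulmx_lin A (- 'i) x y) -(mulmx_lin A 'i x y) in eA.
rewrite -polar_sum.
exact: (pair_core (Qf_ge0 _) (Qf_ge0 _) (Qf_ge0 _) (Qf_ge0 _) b1 b2 b3 b4 q1 q2 q3 q4 eA (polar x y)).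
Qed.

Lemma sum_prod_dffun (K : comPzRingType) (I : finType) (T_ : I -> finType)
  (F : forall i, T_ i -> K) :
  \sum_(f : {dffun forall i : I, T_ i}) \prod_i F i (f i) =
  \prod_i \sum_(t : T_ i) F i t.
Proof.
pose P_ := fun i => [ffun x => F i x].
rewrite (reindex (@dffun_of_fprod I T_)); last first.
  exact/onW_bij/dffun_of_fprod_bij.
transitivity (\sum_(t : fprod T_) \prod_(i in I) P_ i (t i)).
  by apply: eq_bigr => t _; apply: eq_bigr => i _; rewrite !ffunE.
rewrite (@big_fprod _ 0 1 *%R +%R I T_ P_).
transitivity (\prod_i \sum_(t : T_ i) P_ i t); last first.
  by apply: eq_bigr => i _; apply: eq_bigr => t _; rewrite ffunE.
under [RHS]eq_bigr => i _ do rewrite (big_tag P_).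
by rewrite bigA_distr_big_dep.
Qed.

Lemma conjC_prod (K : numClosedFieldType) (I : Type) (r : seq I) (P : pred I) (F : I -> K) :
  (\prod_(i <- r | P i) F i)^* = \prod_(i <- r | P i) (F i)^*.
Proof. exact: rmorph_prod. Qed.

Lemma conjC_sum (K : numClosedFieldType) (I : Type) (r : seq I) (P : pred I) (F : I -> K) :
  (\sum_(i <- r | P i) F i)^* = \sum_(i <- r | P i) (F i)^*.
Proof. exact: rmorph_sum. Qed.

Lemma outer_dot (R : realType) d (n : 'I_d -> nat) (v w : forall l, 'cV[R[i]]_(n l)) :
  \sum_(i : tidx n) (\prod_l v l (i l) 0) * (\prod_l w l (i l) 0)^* =
  \prod_l vdot (v l) (w l).
Proof.
rewrite -(sum_prod_dffun (fun l t => v l t 0 * (w l t 0)^*)).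
apply: eq_bigr => i _.
rewrite big_split /=; congr (_ * _); exact: conjC_prod.
Qed.

Lemma rank_norm (R : realType) d (n : 'I_d -> nat) r (a : 'I_r -> R[i])
  (v : forall l, 'I_r -> 'cV[R[i]]_(n l)) :
  \sum_(i : tidx n) `|\sum_(k < r) a k * \prod_l v l k (i l) 0| ^+ 2 =
  \sum_(k < r) \sum_(h < r) a k * (a h)^* * \prod_l vdot (v l k) (v l h).
Proof.
under eq_bigr => i _ do rewrite normCK conjC_sum mulr_suml.
under eq_bigr => i _ do under eq_bigr => k _ do rewrite mulr_sumr.
rewrite exchange_big; apply: eq_bigr => k _.
rewrite exchange_big; apply: eq_bigr => h _.
rewrite -outer_dot mulr_sumr; apply: eq_bigr => i _.
rewrite rmorphM /=; ring.
Qed.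

Lemma vgetE (R : realType) p (v : 'cV[R[i]]_p) (o : 'I_p) : vget v o = v o 0.
Proof. by rewrite /vget valK. Qed.

Lemma vgetE' (R : realType) p (v : 'cV[R[i]]_p) x (h : (x < p)%N) : vget v x = v (Ordinal h) 0.
Proof. by rewrite /vget insubT. Qed.

Lemma vget_col_dot (R : realType) p q (e : q = p) (u v : 'cV[R[i]]_p) :
  vdot (\col_(t < q) vget u t) (\col_(t < q) vget v t) = vdot u v.
Proof. by subst q; apply: eq_bigr => t _; rewrite !mxE !vgetE. Qed.

Lemma sub_idx_val d (n : 'I_d -> nat) (j : 'I_d) m (i' : tidx (upd n j m)) t l :
  val (sub_idx i' t l) = if l == j then val t else val (i' l).
Proof. by rewrite /sub_idx ffunE. Qed.

Lemma mode_prod_rank (R : realType) d (n : 'I_d -> nat) r (alpha : 'I_r -> R[i])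
  (y : forall l : 'I_d, 'I_r -> 'cV[R[i]]_(n l)) (j : 'I_d) m (A : 'M[R[i]]_(m, n j))
  (i' : tidx (upd n j m)) :
  mode_prod (rank_tensor alpha y) A i' =
  \sum_(k < r) alpha k * \prod_l (\col_(t < upd n j m l)
       (if l == j then vget (A *m y j k) t else vget (y l k) t)) (i' l) 0.
Proof.
rewrite /mode_prod /rank_tensor /outer.
have hj : forall t : 'I_(n j), sub_idx i' t j = t.
  by move=> t; apply: val_inj; rewrite sub_idx_val eqxx.
have hl : forall k (t : 'I_(n j)) l, l != j -> y l k (sub_idx i' t l) 0 =
   (\col_(t0 < upd n j m l) (if l == j then vget (A *m y j k) t0 else vget (y l k) t0)) (i' l) 0.
  move=> k t l hlj; rewrite mxE (negbTE hlj).
  by rewrite -[y l k (sub_idx i' t l) 0]vgetE sub_idx_val (negbTE hlj).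
under eq_bigr => t _ do rewrite mulr_suml.
rewrite exchange_big; apply: eq_bigr => k _.
rewrite [in RHS](bigD1 j) //= mxE eqxx (vgetE' _ (j_idx_proof i')) mxE.
under eq_bigr => t _ do rewrite (bigD1 j) //= hj.
under eq_bigr => t _ do under eq_bigr => l hlj do rewrite (hl k t l hlj).
rewrite mulr_suml mulr_sumr; apply: eq_bigr => t _; ring.
Qed.
Lemma sum_cs (K : numDomainType) r (a : 'I_r -> K) : (forall k, 0 <= a k) ->
  (\sum_k a k) ^+ 2 <= r%:R * \sum_k a k ^+ 2.
Proof.
move=> a0.
have hh : 0 <= \sum_k \sum_h (a k - a h) ^+ 2.
  apply: sumr_ge0 => k _; apply: sumr_ge0 => h _.
  by rewrite -real_normK ?exprn_ge0 ?normr_ge0 // rpredB // ger0_real.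
have e : \sum_k \sum_h (a k - a h) ^+ 2 =
   (r%:R * \sum_k a k ^+ 2) *+ 2 - ((\sum_k a k) ^+ 2) *+ 2.
  transitivity (\sum_(k < r) (a k ^+ 2 *+ r + \sum_h a h ^+ 2 - 2 * (a k * \sum_h a h))).
    apply: eq_bigr => k _.
    transitivity (\sum_(h < r) (a k ^+ 2 + a h ^+ 2 - 2 * (a k * a h))).
      by apply: eq_bigr => h _; ring.
    by rewrite sumrB big_split /= sumr_const card_ord -mulr_sumr -mulr_sumr.
  rewrite sumrB big_split /= sumr_const card_ord.
  rewrite -mulr_sumr -mulr_suml.
  rewrite sumrMnl; ring.
by move: hh; rewrite e subr_ge0 ler_pMn2r.
Qed.
Lemma eps4_lt1 (K : numFieldType) (eps : K) : 0 < eps -> eps < 1 -> 0 < 1 - eps / 4.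
Proof.
move=> e0 e1; rewrite subr_gt0 ltr_pdivrMr ?ltr0n // mul1r.
by apply: (lt_le_trans e1); rewrite ler1n.
Qed.

Lemma final2 (K : numFieldType) (a mu eps x z : K) :
 0 <= a -> 0 <= mu -> mu <= 1 -> 0 < eps -> eps < 1 -> a <= mu + eps / 2 ->
 1 - eps / 4 <= x -> 1 - eps / 4 <= z ->
 x^-1 * z^-1 * a <= (mu + eps) / (1 - eps / 4).
Proof.
move=> a0 m0 m1 e0 e1 ha hx hz.
have w0 := eps4_lt1 e0 e1.
have x0 : 0 < x := lt_le_trans w0 hx.
have z0 : 0 < z := lt_le_trans w0 hz.
have -> : x^-1 * z^-1 * a = a / (x * z) by rewrite invfM mulrC.
rewrite ler_pdivrMr ?mulr_gt0 //.
apply: (le_trans ha).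
apply: (@le_trans _ _ ((mu + eps) / (1 - eps / 4) * ((1 - eps / 4) * (1 - eps / 4)))).
  rewrite mulrA divfK ?gt_eqF // -subr_ge0.
  have -> : (mu + eps) * (1 - eps / 4) - (mu + eps / 2) = eps / 4 * (2 - mu - eps).
    by field.
  apply: mulr_ge0; first by rewrite divr_ge0 ?ltW.
  rewrite -addrA -opprD subr_ge0 (_ : 2 = 1 + 1); last by ring.
  by apply: lerD => //; apply: ltW.
apply: ler_wpM2l.
  by apply: divr_ge0; [apply: addr_ge0 => //; exact: ltW | exact: ltW].
by apply: ler_pM => //; apply: ltW.
Qed.

Lemma half_of (K : numFieldType) (X eps : K) : 4 * X <= eps / 4 * (4 * (1 + 1)) -> X <= eps / 2.
Proof.
have -> : eps / 4 * (4 * (1 + 1)) = 4 * (eps / 2) by field.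
by rewrite ler_pM2l // ltr0n.
Qed.

Lemma normB_conj (K : numClosedFieldType) (a b : K) : `|a^* - b^*| = `|a - b|.
Proof. by rewrite -rmorphB norm_conjC. Qed.

Lemma sqrt_rr1_le (K : numClosedFieldType) (r : nat) :
  sqrtC ((r * (r - 1))%:R : K) <= r%:R.
Proof.
rewrite -(sqrCK (ler0n K r)) ler_sqrtC ?nnegrE ?ler0n ?exprn_ge0 // -natrX ler_nat.
by rewrite -mulnn leq_mul // leq_subr.
Qed.

Lemma rm1_le_sqrt (K : numClosedFieldType) (r : nat) (S : K) : 0 <= S ->
  (r%:R - 1) * S <= sqrtC ((r * (r - 1))%:R : K) * S.
Proof.
move=> S0; case: r => [|r].
  rewrite mul0n sqrtC0 mul0r sub0r mulN1r oppr_le0 //.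
apply: ler_wpM2r => //.
rewrite -natr1 addrK subn1 /= -{1}(sqrCK (ler0n K r)) ler_sqrtC ?nnegrE ?ler0n ?exprn_ge0 //.
by rewrite -natrX ler_nat -mulnn leq_mul.
Qed.

Lemma final3 (K : numClosedFieldType) (r : nat) (eps M S X2 : K) :
  0 < eps -> 0 <= M -> 0 <= S -> X2 <= r%:R * S ->
  eps / 4 * S + eps / 2 * M * (X2 - S) <= eps * (1 + sqrtC ((r * (r - 1))%:R : K) * M) * S.
Proof.
move=> e0 M0 S0 hX.
set s := sqrtC _.
have s0 : 0 <= s by rewrite sqrtC_ge0 ler0n.
have h1 : eps / 4 * S <= eps * S.
  apply: ler_wpM2r => //; rewrite ler_pdivrMr ?ltr0n //.
  by apply: ler_peMr; [exact: ltW | rewrite ler1n].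
have h2 : X2 - S <= s * S.
  apply: le_trans (rm1_le_sqrt r S0); rewrite mulrBl mul1r lerD2r //.
have h3 : eps / 2 * M * (X2 - S) <= eps / 2 * (M * (s * S)).
  rewrite -mulrA; apply: ler_wpM2l; first by rewrite divr_ge0 ?ltW.
  exact: ler_wpM2l.
have h4 : eps / 2 * (M * (s * S)) <= eps * (M * (s * S)).
  apply: ler_wpM2r; first by rewrite !mulr_ge0.
  rewrite ler_pdivrMr ?ltr0n //.
  by apply: ler_peMr; [exact: ltW | rewrite ler1n].
have -> : eps * (1 + s * M) * S = eps * S + eps * (M * (s * S)) by ring.
exact: lerD h1 (le_trans h3 h4).
Qed.

Unset Implicit Arguments.
Theorem theorem3 (R : realType) (d : nat) (n : 'I_d -> nat) (r : nat)
  (alpha : 'I_r -> R[i]) (y : forall l : 'I_d, 'I_r -> 'cV[R[i]]_(n l))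
  (j : 'I_d) (eps : R[i]) (m : nat) (A : 'M[R[i]]_(m, n j)) :
  standard_form y ->
  0 < eps < 1 ->
  JL_embedding (eps / 4) A
    (fun x => (exists h k : 'I_r, (h < k)%N /\
                 (x = y j k - y j h \/ x = y j k + y j h \/
                  x = y j k - 'i *: y j h \/ x = y j k + 'i *: y j h))
              \/ (exists k : 'I_r, x = y j k)) ->
  let Y : tensor R n := rank_tensor alpha y in
  let Y' : tensor R (upd n j m) := mode_prod Y A in
  let nA (k : 'I_r) : R[i] := vnorm (A *m y j k) in
  let alpha' (k : 'I_r) : R[i] := alpha k * nA k in
  let y' : forall l : 'I_d, 'I_r -> 'cV[R[i]]_(upd n j m l) :=
    fun l k => \col_(t < upd n j m l)
       (if l == j then vget ((nA k)^-1 *: (A *m y j k)) t else vget (y l k) t) in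
  let mu (l : 'I_d) : R[i] := coherence (y l) in
  let mu' (l : 'I_d) : R[i] := coherence (y' l) in
  let muY : R[i] := \big[Num.max/0]_(l < d) mu l in
  [/\ (forall k : 'I_r, `|alpha' k - alpha k| <= eps * `|alpha k| / 4),
      inf_norm alpha' <= (1 + eps / 4) * inf_norm alpha,
      mu' j <= (mu j + eps) / (1 - eps / 4),
      (forall l : 'I_d, l != j -> mu' l = mu l) &
      [/\ `|tnorm Y' ^+ 2 - tnorm Y ^+ 2|
            <= eps * (1 + sqrtC (r * (r - 1))%:R * \prod_(l < d | l != j) mu l)
                   * l2_norm alpha ^+ 2,
          eps * (1 + sqrtC (r * (r - 1))%:R * \prod_(l < d | l != j) mu l)
              * l2_norm alpha ^+ 2
            <= eps * (1 + r%:R * muY ^+ d.-1) * l2_norm alpha ^+ 2 &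
          eps * (1 + r%:R * muY ^+ d.-1) * l2_norm alpha ^+ 2
            <= eps * (r%:R + 1) * l2_norm alpha ^+ 2]].
Proof.
move=> hstd /andP [e0 e1] hJL Y Y' nA alpha' y' mu mu' muY.
have hyy : forall l k, vdot (y l k) (y l k) = 1.
  by move=> l k; rewrite -vnorm_sq hstd expr1n.
have E0 : 0 < eps / 4 by rewrite divr_gt0 ?ltr0n.
have w0 := eps4_lt1 e0 e1.
have hek : forall k, exists e, `|e| <= eps / 4 /\ vdot (A *m y j k) (A *m y j k) = 1 + e.
  move=> k; have [ex [hex hq]] := hJL (y j k) (or_intror (ex_intro _ k erefl)).
  exists ex; split; first exact: jl_abs.
  by rewrite -vnorm_sq hq vnorm_sq hyy mulr1.
have nA0 : forall k, 0 <= nA k by move=> k; exact: vnorm_ge0.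
have nAr : forall k, nA k \is Num.real by move=> k; exact: ger0_real.
have nA2 : forall k, nA k ^+ 2 = vdot (A *m y j k) (A *m y j k) by move=> k; exact: vnorm_sq.
have hnA1 : forall k, `|nA k - 1| <= eps / 4.
  move=> k; have [e [he hq]] := hek k.
  apply: le_trans he.
  have -> : e = nA k ^+ 2 - 1 by rewrite nA2 hq; ring.
  have -> : nA k ^+ 2 - 1 = (nA k - 1) * (nA k + 1) by ring.
  rewrite normrM (ger0_norm (_ : 0 <= nA k + 1)) ?addr_ge0 //.
  by rewrite ler_peMr ?normr_ge0 // lerDr.
have hnAlo : forall k, 1 - eps / 4 <= nA k.
  move=> k; have := hnA1 k; rewrite real_ler_norml ?rpredB ?nAr ?rpred1 // => /andP [h _].
  by move: h; rewrite lerBrDr addrC.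
have hnAhi : forall k, nA k <= 1 + eps / 4.
  move=> k; have := hnA1 k; rewrite real_ler_norml ?rpredB ?nAr ?rpred1 // => /andP [_ h].
  by move: h; rewrite lerBlDr addrC.
have pb : forall k h : 'I_r, (h < k)%N ->
    `|vdot (A *m y j k) (A *m y j h) - vdot (y j k) (y j h)| <= eps / 2.
  move=> k h hk.
  have jl : forall c : R[i], (c = 1 \/ c = -1 \/ c = - 'i \/ c = 'i) ->
     exists e, `|e| <= eps / 4 /\
        Qf (A *m (y j k + c *: y j h)) = (1 + e) * Qf (y j k + c *: y j h).
    move=> c hc.
    have hd : y j k + c *: y j h = y j k - y j h \/ y j k + c *: y j h = y j k + y j h \/
        y j k + c *: y j h = y j k - 'i *: y j h \/ y j k + c *: y j h = y j k + 'i *: y j h.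
      case: hc => [->|[->|[->|->]]]; rewrite ?scale1r ?scaleN1r ?scaleNr;
        by [left | right; left | right; right; left | right; right; right].
    have [|ex [hex hq]] := hJL (y j k + c *: y j h).
      by left; exists h, k; split.
    by exists ex; split; [exact: jl_abs | rewrite /Qf -!vnorm_sq].
  have j1 := jl 1 (or_introl erefl).
  have j2 := jl (-1) (or_intror (or_introl erefl)).
  have j3 := jl (- 'i) (or_intror (or_intror (or_introl erefl))).
  have j4 := jl 'i (or_intror (or_intror (or_intror erefl))).
  have := @pair_bound R _ _ A (y j k) (y j h) (eps / 4) j1 j2 j3 j4.
  rewrite !hyy; move=> /half_of; exact.
have off : forall k h : 'I_r, k != h ->
    `|vdot (A *m y j k) (A *m y j h) - vdot (y j k) (y j h)| <= eps / 2.
  move=> k h; rewrite neq_ltn => /orP [hkh|hhk]; last exact: pb.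
  rewrite (vdotC (A *m y j h)) (vdotC (y j h)) normB_conj; exact: pb.
have p1 : forall k, `|alpha' k - alpha k| <= eps * `|alpha k| / 4.
  move=> k; have -> : alpha' k - alpha k = alpha k * (nA k - 1) by rewrite /alpha'; ring.
  have -> : eps * `|alpha k| / 4 = `|alpha k| * (eps / 4) by ring.
  by rewrite normrM; apply: ler_wpM2l => //; exact: hnA1.
have p2 : inf_norm alpha' <= (1 + eps / 4) * inf_norm alpha.
  rewrite /inf_norm; apply: bigmax_le.
    apply: mulr_ge0; first by rewrite addr_ge0 // ltW.
    by apply: bigmax_ge0 => k _; exact: normr_ge0.
  move=> k _; rewrite /alpha' normrM (ger0_norm (nA0 k)) mulrC.
  apply: ler_pM; [exact: nA0 | exact: normr_ge0 | exact: hnAhi |].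
  exact: (@le_bigmax _ _ xpredT (fun k0 => `|alpha k0|) k (fun _ _ => normr_ge0 _) isT).
have hmu0 : forall l, 0 <= mu l.
  move=> l; apply: bigmax_ge0 => k _; apply: bigmax_ge0 => h _; exact: normr_ge0.
have hmu1 : forall l, mu l <= 1.
  move=> l; apply: bigmax_le => // k _; apply: bigmax_le => // h _.
  exact: cs_unit.
have hmuk : forall l k h, h != k -> `|vdot (y l k) (y l h)| <= mu l.
  move=> l k h hk.
  have i1 := @le_bigmax _ _ (fun h0 => h0 != k) (fun h0 => `|vdot (y l k) (y l h0)|) h
     (fun _ _ => normr_ge0 _) hk.
  have i2 := @le_bigmax _ _ xpredT
     (fun k0 => \big[Num.max/0]_(h0 < r | h0 != k0) `|vdot (y l k0) (y l h0)|) k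
     (fun k0 _ => bigmax_ge0 (fun _ _ => normr_ge0 _)) isT.
  exact: le_trans i1 i2.
have p3 : mu' j <= (mu j + eps) / (1 - eps / 4).
  have hupdj : upd n j m j = m by rewrite /upd eqxx.
  have g0 : 0 <= (mu j + eps) / (1 - eps / 4).
    by apply: divr_ge0; [rewrite addr_ge0 // ?hmu0 // ltW | exact: ltW].
  rewrite /mu' /coherence; apply: bigmax_le => // k _; apply: bigmax_le => // h hk.
  rewrite /y' eqxx (vget_col_dot hupdj) vdotZl vdotZr.
  rewrite (conj_Creal (_ : (nA h)^-1 \is Num.real)); last by rewrite rpredV.
  have i1 : 0 <= (nA k)^-1 by rewrite invr_ge0.
  have i2 : 0 <= (nA h)^-1 by rewrite invr_ge0.
  rewrite normrM normrM (ger0_norm i1) (ger0_norm i2).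
  rewrite mulrA.
  have ha : `|vdot (A *m y j k) (A *m y j h)| <= mu j + eps / 2.
    rewrite -(subrK (vdot (y j k) (y j h)) (vdot (A *m y j k) (A *m y j h))) addrC.
    apply: (le_trans (ler_normD _ _)); apply: lerD; first exact: hmuk.
    by apply: off; rewrite eq_sym.
  exact: final2 (normr_ge0 _) (hmu0 j) (hmu1 j) e0 e1 ha (hnAlo k) (hnAlo h).
have p4 : forall l, l != j -> mu' l = mu l.
  move=> l hl; rewrite /mu' /mu /coherence; apply: eq_bigr => k _; apply: eq_bigr => h _.
  have hupdl : upd n j m l = n l by rewrite /upd (negbTE hl).
  by rewrite /y' (negbTE hl) (vget_col_dot hupdl).
split; [exact: p1 | exact: p2 | exact: p3 | exact: p4 |].
have hupdj : upd n j m j = m by rewrite /upd eqxx.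
have hupdl : forall l, l != j -> upd n j m l = n l by move=> l hl; rewrite /upd (negbTE hl).
have hY : tnorm Y ^+ 2 = \sum_(k < r) \sum_(h < r) alpha k * (alpha h)^* *
     (vdot (y j k) (y j h) * \prod_(l < d | l != j) vdot (y l k) (y l h)).
  rewrite /tnorm sqrtCK /Y /rank_tensor /outer.
  rewrite (rank_norm alpha y).
  by apply: eq_bigr => k _; apply: eq_bigr => h _; rewrite (bigD1 j).
have hY' : tnorm Y' ^+ 2 = \sum_(k < r) \sum_(h < r) alpha k * (alpha h)^* *
     (vdot (A *m y j k) (A *m y j h) * \prod_(l < d | l != j) vdot (y l k) (y l h)).
  rewrite /tnorm sqrtCK /Y' /Y.
  under eq_bigr => i0 _ do rewrite mode_prod_rank.
  rewrite rank_norm.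
  apply: eq_bigr => k _; apply: eq_bigr => h _; rewrite (bigD1 j) //= eqxx (vget_col_dot hupdj).
  congr (_ * (_ * _)); apply: eq_bigr => l hl.
  by rewrite (negbTE hl) (vget_col_dot (hupdl l hl)).
have S0 : 0 <= \sum_(k < r) `|alpha k| ^+ 2 by apply: sumr_ge0 => k _; exact: exprn_ge0.
have hS : l2_norm alpha ^+ 2 = \sum_(k < r) `|alpha k| ^+ 2 by rewrite /l2_norm sqrtCK.
have M0 : 0 <= \prod_(l < d | l != j) mu l by apply: prodr_ge0 => l _; exact: hmu0.
have hG : forall k h, h != k ->
    `|\prod_(l < d | l != j) vdot (y l k) (y l h)| <= \prod_(l < d | l != j) mu l.
  move=> k h hk; rewrite normr_prod; apply: ler_prod => l _.
  by rewrite normr_ge0 hmuk.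
have hGkk : forall k, \prod_(l < d | l != j) vdot (y l k) (y l k) = 1.
  by move=> k; apply: big1 => l _; exact: hyy.
have hdiff : tnorm Y' ^+ 2 - tnorm Y ^+ 2 = \sum_(k < r) \sum_(h < r) alpha k * (alpha h)^* *
   ((vdot (A *m y j k) (A *m y j h) - vdot (y j k) (y j h)) *
     \prod_(l < d | l != j) vdot (y l k) (y l h)).
  rewrite hY' hY -sumrB; apply: eq_bigr => k _; rewrite -sumrB; apply: eq_bigr => h _; ring.
have hk : forall k : 'I_r, \sum_(h < r) `|alpha k * (alpha h)^* *
   ((vdot (A *m y j k) (A *m y j h) - vdot (y j k) (y j h)) *
     \prod_(l < d | l != j) vdot (y l k) (y l h))|
   <= `|alpha k| ^+ 2 * (eps / 4) + eps / 2 * (\prod_(l < d | l != j) mu l) *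
        (`|alpha k| * \sum_(h < r) `|alpha h| - `|alpha k| ^+ 2).
  move=> k; rewrite (bigD1 k) //=.
  apply: lerD.
    have [e [he hq]] := hek k.
    rewrite hq hyy hGkk mulr1 (_ : 1 + e - 1 = e); last by ring.
    rewrite !normrM norm_conjC -expr2; apply: ler_wpM2l => //; exact: exprn_ge0.
  have -> : `|alpha k| * \sum_(h < r) `|alpha h| - `|alpha k| ^+ 2 =
      `|alpha k| * \sum_(h < r | h != k) `|alpha h|.
    by rewrite (bigD1 k) //=; ring.
  rewrite mulr_sumr mulr_sumr; apply: ler_sum => h hk'.
  rewrite !normrM norm_conjC [X in _ <= X]mulrC.
  apply: ler_wpM2l; first by rewrite mulr_ge0.
  apply: ler_pM; [exact: normr_ge0 | exact: normr_ge0 | | exact: hG].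
  by apply: off; rewrite eq_sym.
have q1 : `|tnorm Y' ^+ 2 - tnorm Y ^+ 2|
     <= eps * (1 + sqrtC (r * (r - 1))%:R * \prod_(l < d | l != j) mu l) * l2_norm alpha ^+ 2.
  rewrite hS hdiff.
  apply: (le_trans (ler_norm_sum _ _ _)).
  apply: (@le_trans _ _ (\sum_(k < r) (`|alpha k| ^+ 2 * (eps / 4) + eps / 2 *
      (\prod_(l < d | l != j) mu l) * (`|alpha k| * \sum_(h < r) `|alpha h| - `|alpha k| ^+ 2)))).
    apply: ler_sum => k _; exact: le_trans (ler_norm_sum _ _ _) (hk k).
  rewrite big_split /= -mulr_suml -mulr_sumr sumrB -mulr_suml -expr2.
  rewrite (mulrC (\sum_(k < r) `|alpha k| ^+ 2)).
  apply: final3 => //; apply: sum_cs => k; exact: normr_ge0.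
have muY0 : 0 <= muY by apply: bigmax_ge0 => l _; exact: hmu0.
have muY1 : muY <= 1 by apply: bigmax_le => // l _; exact: hmu1.
have hmuY : forall l, mu l <= muY.
  move=> l; exact: (@le_bigmax _ _ xpredT mu l (fun l _ => hmu0 l) isT).
have q2 : eps * (1 + sqrtC (r * (r - 1))%:R * \prod_(l < d | l != j) mu l) * l2_norm alpha ^+ 2
      <= eps * (1 + r%:R * muY ^+ d.-1) * l2_norm alpha ^+ 2.
  rewrite hS; apply: ler_wpM2r => //; apply: ler_wpM2l; first exact: ltW.
  rewrite lerD2l; apply: ler_pM => //; first by rewrite sqrtC_ge0 ler0n.
    exact: sqrt_rr1_le.
  have -> : muY ^+ d.-1 = \prod_(l < d | l != j) muY by rewrite prodr_const cardC1 card_ord.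
  by apply: ler_prod => l _; rewrite hmu0 hmuY.
have q3 : eps * (1 + r%:R * muY ^+ d.-1) * l2_norm alpha ^+ 2
      <= eps * (r%:R + 1) * l2_norm alpha ^+ 2.
  rewrite hS; apply: ler_wpM2r => //; apply: ler_wpM2l; first exact: ltW.
  rewrite addrC lerD2r -{2}(mulr1 r%:R); apply: ler_wpM2l; first exact: ler0n.
  exact: exprn_ile1.
by split.
Qed.
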